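(* In any additive poset, any set of pairwise independent nonzero elements is linearly independent over $\mathbb{Z}/2\mathbb{Z}$.
   Context: An additive poset is a pair $(A,\le)$ where $A$ is an abelian group and $\le$ is a partial order on $A$ such that for all $a,b,c\in A$: $(\ast)$ if $b\le a$ and $c\le a$ then $b+c\le a$; $(\ast\ast)$ if $a\le b$ and $a\le c$ then $a\le a+b+c$. Every element satisfies $a+a=0$, so $A$ is a $\mathbb{Z}/2\mathbb{Z}$-vector space. Elements $a,b\in A$ are called independent if $a\le a+b$; this relation is symmetric. *)

(* Defs.v *)
From HB Require Import structures.
From mathcomp Require Import all_boot all_order all_algebra.
Set Implicit Arguments. Unset Strict Implicit. Unset Printing Implicit Defensive.
Import GRing.Theory.
Local Open Scope ring_scope.

Definition additive_poset (A : zmodType) (le : A -> A -> Prop) : Prop :=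
  [/\ (forall a, le a a),
      (forall a b, le a b -> le b a -> a = b),
      (forall a b c, le a b -> le b c -> le a c),
      (forall a b c, le b a -> le c a -> le (b + c) a) &
      (forall a b c, le a b -> le a c -> le a (a + b + c))].

Definition independent (A : zmodType) (le : A -> A -> Prop) (a b : A) : Prop :=
  le a (a + b).

(* Linear independence over Z/2Z of a (possibly infinite) set S : every
   nonempty finite family of pairwise distinct elements of S has nonzero sum
   (over F_2 the only nontrivial coefficients are 1). *)
Definition lin_indep_Z2 (A : zmodType) (S : A -> Prop) : Prop :=
  forall s : seq A, uniq s -> s != [::] -> (forall x, x \in s -> S x) ->
    \sum_(x <- s) x != 0.

(* Main.v *)
Require Import Defs.
From HB Require Import structures.
From mathcomp Require Import all_boot all_order all_algebra.
Import GRing.Theory.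
Local Open Scope ring_scope.

Lemma char2 (A : zmodType) (le : A -> A -> Prop)
  (hA : additive_poset le) (a : A) : a + a = 0.
Proof.
case: hA => refl anti _ h1 h2.
have e1 : le (a + a) a by apply: h1; apply: refl.
have e2 : le (a + a + a) a by apply: h1 => //; apply: refl.
have e3 : le a (a + a + a) by apply: h2; apply: refl.
have e := anti _ _ e2 e3.
by apply/eqP; rewrite -(addrK a (a + a)) e subrr.
Qed.

Lemma acc (A : zmodType) (le : A -> A -> Prop)
  (hA : additive_poset le) (a : A) (t : seq A) :
  (forall y, y \in t -> le a (a + y)) -> le a (a + \sum_(y <- t) y).
Proof.
elim: t => [|y t IH] H.
  by rewrite big_nil addr0; case: hA.
rewrite big_cons.
have hy : le a (a + y) by apply: H; rewrite inE eqxx.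
have ht : le a (a + \sum_(y <- t) y).
  by apply: IH => z hz; apply: H; rewrite inE hz orbT.
have := (let: And5 _ _ _ _ h2 := hA in h2) a _ _ hy ht.
have c := @char2 _ _ hA a.
suff -> : a + (a + y) + (a + \sum_(y <- t) y) = a + (y + \sum_(y <- t) y) by [].
by rewrite (addrA a a y) c add0r addrCA.
Qed.

Theorem lemma4p2 (A : zmodType) (le : A -> A -> Prop)
  (hA : additive_poset le) (S : A -> Prop)
  (hnz : forall a, S a -> a <> 0)
  (hind : forall a b, S a -> S b -> a <> b -> independent le a b) :
  lin_indep_Z2 S.
Proof.
move=> [//|x t] /= /andP [xt ut] _ HS.
rewrite big_cons; apply/eqP => hs.
have Sx : S x by apply: HS; rewrite inE eqxx.
have l1 : le x (x + \sum_(y <- t) y).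
  apply: (@acc _ _ hA) => y hy; apply: hind => //.
    by apply: HS; rewrite inE hy orbT.
  by move=> exy; rewrite exy hy in xt.
rewrite hs in l1.
have l0 : le 0 x.
  rewrite -(@char2 _ _ hA x); case: hA => refl _ _ h1 _; apply: h1; apply: refl.
by apply: (hnz x Sx); case: hA => _ anti _ _ _; apply: anti.
Qed.
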